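(* Let $2\le n\le m$ be integers and let $T_{n,m}=C_n\,\Box\, C_m$. Then $T_{n,m}$ is a connected highly-regular graph, and it is not distance-regular unless $(n,m)\in\{(2,2),(2,4),(3,3),(4,4)\}$.
   Context: For $n\ge3$, $C_n$ is the cycle graph on $n$ vertices; $C_2$ denotes the graph with two vertices joined by a single edge. The Cartesian product $\Gamma_1\Box\Gamma_2$ has vertex set $V(\Gamma_1)\times V(\Gamma_2)$, with $(u_1,v_1)\sim(u_2,v_2)$ iff ($u_1=u_2$ and $v_1\sim v_2$) or ($v_1=v_2$ and $u_1\sim u_2$). A graph $\Gamma$ of order $N$ is highly-regular with collapsed adjacency matrix $C=[c_{i,j}]_{1\le i,j\le M}$, where $2\le M<N$ (the value $M=N$ allowed only when $N=2$), if for every vertex $u$ there is a partition of $V(\Gamma)$ into nonempty sets $V_1(u)=\{u\},\dots,V_M(u)$ such that every $y\in V_j(u)$ is adjacent to exactly $c_{i,j}$ vertices of $V_i(u)$. A connected graph is distance-regular if for all $u,v$ the numbers $|D_1(v)\cap D_{i-1}(u)|$, $|D_1(v)\cap D_i(u)|$, $|D_1(v)\cap D_{i+1}(u)|$ depend only on $i=d(u,v)$, where $D_i(u)=\{v:d(u,v)=i\}$. *)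

(* Defs.v *)
From mathcomp Require Import all_boot.
Set Implicit Arguments. Unset Strict Implicit. Unset Printing Implicit Defensive.

(* Cycle C_n on vertex set 'I_n: i ~ j iff j = i+1 (mod n) or i = j+1 (mod n).
   For n >= 3 this is the cycle graph; for n = 2 it is the single edge 0 -- 1. *)
Definition cycle_adj (n : nat) : rel 'I_n :=
  fun i j => (val j == (val i).+1 %% n) || (val i == (val j).+1 %% n).

Definition box_adj (T1 T2 : finType) (e1 : rel T1) (e2 : rel T2) : rel (T1 * T2) :=
  fun p q => ((p.1 == q.1) && e2 p.2 q.2) || ((p.2 == q.2) && e1 p.1 q.1).

Definition torus_adj (n m : nat) : rel ('I_n * 'I_m) :=
  box_adj (@cycle_adj n) (@cycle_adj m).
Arguments torus_adj n m : clear implicits.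
Arguments cycle_adj n : clear implicits.

Definition connected_graph (T : finType) (e : rel T) : Prop :=
  forall x y : T, connect e x y.

(* The partition V_1(u),...,V_M(u) is encoded by a labelling
   f : T -> 'I_M, with V_{i+1}(u) = f^{-1}(i); index 0 plays the role of V_1(u) = {u}. *)
Definition highly_regular_with (T : finType) (e : rel T) (M : nat)
    (C : 'I_M -> 'I_M -> nat) : Prop :=
  ((2 <= M < #|T|) \/ (M = #|T| /\ #|T| = 2)) /\
  forall u : T, exists f : T -> 'I_M,
    (forall i : 'I_M, exists x : T, f x = i) /\
    (forall x : T, (val (f x) == 0) = (x == u)) /\
    (forall (i j : 'I_M) (y : T), f y = j ->
       #|[set x : T | (f x == i) && e x y]| = C i j).

Definition highly_regular (T : finType) (e : rel T) : Prop :=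
  exists M (C : 'I_M -> 'I_M -> nat), highly_regular_with e C.

Fixpoint walkn (T : finType) (e : rel T) (k : nat) (x y : T) : bool :=
  match k with
  | 0 => x == y
  | k'.+1 => [exists z, e x z && walkn e k' z y]
  end.

Definition dist_set (T : finType) (e : rel T) (i : nat) (u : T) : {set T} :=
  [set v | walkn e i u v && [forall j : 'I_i, ~~ walkn e j u v]].

Definition dist_set_pred (T : finType) (e : rel T) (i : nat) (u : T) : {set T} :=
  if i is i'.+1 then dist_set e i' u else set0.

Definition nbhd (T : finType) (e : rel T) (v : T) : {set T} := [set x | e v x].

Definition distance_regular (T : finType) (e : rel T) : Prop :=
  connected_graph e /\
  exists c a b : nat -> nat,
    forall (u v : T) (i : nat), v \in dist_set e i u ->
      [/\ #|nbhd e v :&: dist_set_pred e i u| = c i,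
          #|nbhd e v :&: dist_set e i u| = a i &
          #|nbhd e v :&: dist_set e i.+1 u| = b i].

(* Main.v *)
Require Import Defs.
From mathcomp Require Import all_boot.
From mathcomp Require Import all_algebra zify ring.
Import GRing.Theory.

Lemma card_aut (T : finType) (e : rel T) M (phi psi : T -> T)
  (c1 : cancel phi psi) (c2 : cancel psi phi)
  (he : forall x w, e (phi x) (phi w) = e x w)
  (f1 f2 : T -> 'I_M) (hf : forall x, f2 (phi x) = f1 x) (i : 'I_M) (y : T) :
  #|[set x | (f1 x == i) && e x y]| = #|[set x | (f2 x == i) && e x (phi y)]|.
Proof.
rewrite -(card_imset _ (can_inj c1)); apply: eq_card => x.
rewrite inE; apply/imsetP/idP.
  by move=> [z]; rewrite inE => /andP [h1 h2] ->; rewrite hf he h1 h2.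
move=> /andP [h1 h2]; exists (psi x); last by rewrite c2.
by rewrite inE -hf c2 h1 -he c2 h2.
Qed.

Section Torus.
Variables p q : nat.
Local Notation n := p.+2.
Local Notation m := q.+2.
Local Notation T := ('I_n * 'I_m)%type.
Local Notation e := (torus_adj n m).

Lemma cadjZ r (i j : 'I_r.+2) : cycle_adj r.+2 i j = (j == i + 1)%R || (i == j + 1)%R.
Proof.
by rewrite /cycle_adj -!val_eqE /= (modn_small (_ : 1 < r.+2)%N) // !addn1.
Qed.

Lemma cadd r (c i j : 'I_r.+2) : cycle_adj r.+2 (i + c)%R (j + c)%R = cycle_adj r.+2 i j.
Proof. by rewrite !cadjZ !(addrAC _ c) !(can_eq (addrK c)). Qed.

Lemma copp r (i j : 'I_r.+2) : cycle_adj r.+2 (- i)%R (- j)%R = cycle_adj r.+2 i j.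
Proof.
rewrite !cadjZ orbC; congr orb; apply/eqP/eqP => h.
- have -> : i = (- (- i))%R by rewrite opprK.
  rewrite h; ring.
- rewrite h; ring.
- have -> : j = (- (- j))%R by rewrite opprK.
  rewrite h; ring.
- rewrite h; ring.
Qed.

Lemma cirr r (i : 'I_r.+2) : cycle_adj r.+2 i i = false.
Proof.
rewrite cadjZ orbb -[X in X == _]addr0 (can_eq (addKr i)).
by rewrite -val_eqE /= modn_small.
Qed.

Lemma eirr x : e x x = false.
Proof. by rewrite /torus_adj /box_adj !cirr !andbF. Qed.

Lemma eadd (x w c : T) :
  e (x.1 + c.1, x.2 + c.2)%R (w.1 + c.1, w.2 + c.2)%R = e x w.
Proof.
by rewrite /torus_adj /box_adj /= !cadd !(can_eq (addrK _)).
Qed.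

Lemma step1 (a : 'I_n) (b : 'I_m) : e (a, b) (a + 1, b)%R.
Proof. apply/orP; right; apply/andP; split => //; by rewrite cadjZ eq_refl. Qed.
Lemma step2 (a : 'I_n) (b : 'I_m) : e (a, b) (a, b + 1)%R.
Proof. apply/orP; left; apply/andP; split => //; by rewrite cadjZ eq_refl. Qed.

Lemma conn : connected_graph e.
Proof.
have h1 k (a : 'I_n) b : connect e (a, b) (a + k%:R, b)%R.
  elim: k => [|k IH]; first by rewrite addr0.
  apply: connect_trans IH _; apply: connect1.
  by rewrite mulrS (addrC 1%R) addrA step1.
have h2 k (a : 'I_n) (b : 'I_m) : connect e (a, b) (a, b + k%:R)%R.
  elim: k => [|k IH]; first by rewrite addr0.
  apply: connect_trans IH _; apply: connect1.
  by rewrite mulrS (addrC 1%R) addrA step2.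
move=> [x1 x2] [y1 y2].
apply: (connect_trans (h1 (val (y1 - x1)%R) x1 x2)).
rewrite natr_Zp addrC subrK.
by have := h2 (val (y2 - x2)%R) y1 x2; rewrite natr_Zp addrC subrK.
Qed.


Definition tsub (x u : T) : T := (x.1 - u.1, x.2 - u.2)%R.
Definition tadd (x u : T) : T := (x.1 + u.1, x.2 + u.2)%R.

Lemma hr_gen M (g : T -> 'I_M) :
  ((2 <= M < #|[set: T]|) \/ (M = #|[set: T]| /\ #|[set: T]| = 2)) ->
  (forall i, exists z, g z = i) ->
  (forall z, (val (g z) == 0) = (z == (0, 0)%R)) ->
  (forall z z', g z = g z' -> exists psi psii : T -> T,
     [/\ cancel psi psii, cancel psii psi, forall x w, e (psi x) (psi w) = e x w,
         psi z = z' & forall x, g (psi x) = g x]) ->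
  highly_regular e.
Proof.
move=> hM hsurj hzero hsym.
pose zj (j : 'I_M) := odflt (0, 0)%R [pick z | g z == j].
have gzj j : g (zj j) = j.
  rewrite /zj; case: pickP => [z /eqP // | h].
  by have [z hz] := hsurj j; move: (h z); rewrite hz eqxx.
exists M, (fun i j => #|[set x | (g x == i) && e x (zj j)]|); split.
  by rewrite cardsT in hM.
move=> u; exists (fun x => g (tsub x u)); split; [|split].
- move=> i; have [z hz] := hsurj i; exists (tadd z u).
  by rewrite /tsub /tadd /= !addrK -hz; case: z {hz}.
- move=> x; rewrite hzero /tsub; case: x => x1 x2; case: u => u1 u2 /=.
  by rewrite !xpair_eqE !subr_eq0.
- move=> i j y hy.
  have [psi [psii [c1 c2 he hz hg]]] := hsym (tsub y u) (zj j) (etrans hy (esym (gzj j))).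
  rewrite -hz.
  apply: (@card_aut _ e M (fun x => psi (tsub x u)) (fun x => tadd (psii x) u)) => //.
  + by move=> x; rewrite c1 /tsub /tadd /= !subrK; case: x.
  + by move=> x; rewrite /tsub /tadd /= !addrK -surjective_pairing c2.
  + move=> x w; rewrite he.
    by have := eadd x w ((- u.1)%R, (- u.2)%R).
Qed.

Definition dd (b : 'I_m) : nat := minn b (m - b).

Lemma dd_le (b : 'I_m) : dd b <= m %/ 2.
Proof. rewrite /dd; have := ltn_ord b; lia. Qed.

Lemma gpf (z : T) : z.1 * (m %/ 2).+1 + dd z.2 < n * (m %/ 2).+1.
Proof.
have h1 := dd_le z.2; have h2 : z.1 < n by [].
have h3 : z.1 * (m %/ 2).+1 <= p.+1 * (m %/ 2).+1 by rewrite leq_mul2r; lia.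
rewrite mulSn; lia.
Qed.

Definition gbig (z : T) : 'I_(n * (m %/ 2).+1) := Ordinal (gpf z).

Lemma dd_opp (b : 'I_m) : dd (- b)%R = dd b.
Proof.
rewrite /dd /=; have hb := ltn_ord b.
case: (posnP (nat_of_ord b)) => h0.
  by rewrite h0 subn0 modnn.
rewrite modn_small; lia.
Qed.

Lemma hr_big : 0 < q -> highly_regular e.
Proof.
move=> hq.
have hdm : 0 < (m %/ 2).+1 by [].
apply: (@hr_gen _ gbig).
- left; rewrite cardsT card_prod !card_ord.
  apply/andP; split; first by rewrite mulSn; lia.
  rewrite ltn_mul2l /=; lia.
- move=> i.
  have ha : i %/ (m %/ 2).+1 < n by rewrite ltn_divLR.
  have hr : i %% (m %/ 2).+1 < m by have := ltn_pmod i hdm; lia.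
  exists (Ordinal ha, Ordinal hr); apply: val_inj => /=.
  rewrite /dd /= (_ : minn _ _ = i %% (m %/ 2).+1); first by rewrite -divn_eq.
  have := ltn_pmod i hdm; lia.
- move=> [z1 z2]; rewrite /= xpair_eqE -!val_eqE /=.
  have := ltn_ord z2; rewrite /dd; case: (posnP (nat_of_ord z1)) => h; nia.
- move=> [z1 z2] [z1' z2'] /(congr1 val) /= h.
  have s1 := leq_ltn_trans (dd_le z2) (ltnSn _).
  have s2 := leq_ltn_trans (dd_le z2') (ltnSn _).
  have e1 : (z1 : nat) = z1'.
    have := congr1 (divn^~ (m %/ 2).+1) h.
    by rewrite !divnMDl // (divn_small s1) (divn_small s2) !addn0.
  have e2 : dd z2 = dd z2'.
    have := congr1 (modn^~ (m %/ 2).+1) h.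
    by rewrite !modnMDl (modn_small s1) (modn_small s2).
  have -> : z1' = z1 by apply: val_inj.
  have [E|E] : z2' = z2 \/ z2' = (- z2)%R.
    have := ltn_ord z2; have := ltn_ord z2'; move: e2; rewrite /dd.
    case: (posnP (nat_of_ord z2)) => h0 ha hb hc.
      left; apply: ord_inj; lia.
    have hv : nat_of_ord (- z2)%R = m - z2 by rewrite /= modn_small; lia.
    case: (ltngtP (nat_of_ord z2') (nat_of_ord z2)) => hh.
    + by right; apply: ord_inj; rewrite hv; lia.
    + by right; apply: ord_inj; rewrite hv; lia.
    + by left; apply: ord_inj.
  + exists id, id; split => //; by rewrite E.
  + exists (fun x => (x.1, - x.2)%R), (fun x => (x.1, - x.2)%R); split.
    * by move=> [x1 x2]; rewrite /= opprK.
    * by move=> [x1 x2]; rewrite /= opprK.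
    * by move=> x w; rewrite /torus_adj /box_adj /= copp (inj_eq oppr_inj).
    * by rewrite E.
    * by move=> [x1 x2]; apply: val_inj; rewrite /= dd_opp.
Qed.

End Torus.

Definition sw (x : 'I_2 * 'I_2) : 'I_2 * 'I_2 := (x.2, x.1).
Definition g22 (z : 'I_2 * 'I_2) : 'I_3 := inord (z.1 + z.2).

Lemma sw_adj x w : torus_adj 2 2 (sw x) (sw w) = torus_adj 2 2 x w.
Proof. by rewrite /torus_adj /box_adj /= orbC. Qed.

Lemma hr_small : highly_regular (torus_adj 2 2).
Proof.
apply: (@hr_gen 0 0 3 g22).
- by left; rewrite cardsT card_prod !card_ord.
- move=> [[|[|[|//]]] ?].
  + by exists (0, 0)%R; apply: val_inj; rewrite /= inordK.
  + by exists (1, 0)%R; apply: val_inj; rewrite /= inordK.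
  + by exists (1, 1)%R; apply: val_inj; rewrite /= inordK.
- by move=> [[[|[|//]] ?] [[|[|//]] ?]]; rewrite /g22 /= inordK.
- move=> [[[|[|//]] ?] [[|[|//]] ?]] [[[|[|//]] ?] [[|[|//]] ?]] /(congr1 val); rewrite /g22 /= !inordK // => /eqP h.
  all: try by [].
  all: first [ by exists id, id; split; [done|done|done| by apply/eqP |done]
             | by exists sw, sw; split; [ by case | by case | exact: sw_adj | by apply/eqP
                 | move=> x; by rewrite /sw /= addnC ] ].
Qed.

Section DR.
Variables (T : finType) (e : rel T) (irr : forall x, e x x = false).

Lemma dist1E u x : (x \in dist_set e 1 u) = e u x.
Proof.
rewrite inE /=; apply/andP/idP.
  by move=> [/existsP [z /andP [h /eqP <-]] _].
move=> h; split; first by apply/existsP; exists x; rewrite h eqxx.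
apply/forallP => j; rewrite (ord1 j) /=; apply/negP => /eqP hux.
by subst; rewrite irr in h.
Qed.

Lemma dist2I u z v : e u z -> e z v -> u != v -> ~~ e u v -> v \in dist_set e 2 u.
Proof.
move=> h1 h2 h3 h4; rewrite inE /=; apply/andP; split.
  apply/existsP; exists z; rewrite h1 /=; apply/existsP; exists v; by rewrite h2 eqxx.
apply/forallP => -[[|[|//]] ?] /=; first by [].
apply/negP => /existsP [w /andP [hw /eqP hwv]]; subst w.
by rewrite hw in h4.
Qed.

Lemma dr_common : distance_regular e -> exists a c : nat, forall u v,
  (e u v -> #|[set x | e v x && e u x]| = a) /\
  (v \in dist_set e 2 u -> #|[set x | e v x && e u x]| = c).
Proof.
move=> [_ [c [a [b H]]]]; exists (a 1), (c 2) => u v.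
have E : nbhd e v :&: dist_set e 1 u = [set x | e v x && e u x].
  by apply/setP => x; rewrite in_setI dist1E !inE.
split.
  move=> huv; have := H u v 1; rewrite dist1E => /(_ huv) [_ h _].
  by rewrite -E.
by move=> hv; have [h _ _] := H u v 2 hv; rewrite -E.
Qed.
End DR.

Lemma cadjN k (i j : 'I_k) : cycle_adj k i j =
  [|| nat_of_ord j == i + 1, (i + 1 == k) && (nat_of_ord j == 0),
      nat_of_ord i == j + 1 | (j + 1 == k) && (nat_of_ord i == 0)].
Proof.
have H (x y : nat) : x < k -> y < k ->
    (x == y.+1 %% k) = (x == y+1) || (y+1 == k) && (x == 0).
  move=> hx hy; case: (ltngtP y.+1 k) => h.
  - rewrite modn_small //; lia.
  - lia.
  - rewrite h modnn; lia.
by rewrite /cycle_adj !H ?ltn_ord // -orbA.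
Qed.

Lemma ord_eqE k (i j : 'I_k) : (i == j) = (nat_of_ord i == nat_of_ord j).
Proof. by []. Qed.

Lemma eirrG k l (x : 'I_k.+2 * 'I_l.+2) : torus_adj k.+2 l.+2 x x = false.
Proof.
rewrite /torus_adj /box_adj !cadjN; case: x => x1 x2 /=; rewrite !ord_eqE.
have := ltn_ord x1; have := ltn_ord x2. lia.
Qed.

Ltac tsolve :=
  rewrite /torus_adj /box_adj /= ?cadjN ?ord_eqE /=; lia.

Lemma not_dr_big p r : ~ distance_regular (torus_adj p.+2 r.+3.+2).
Proof.
move=> /(@dr_common _ _ (@eirrG p r.+3)) [a [c H]].
pose u : 'I_p.+2 * 'I_r.+3.+2 := (ord0, ord0).
pose o1n : 'I_p.+2 := @Ordinal p.+2 1 isT.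
pose o1m : 'I_r.+3.+2 := @Ordinal r.+3.+2 1 isT.
pose o2m : 'I_r.+3.+2 := @Ordinal r.+3.+2 2 isT.
have h1 : (o1n, o1m) \in dist_set (torus_adj p.+2 r.+3.+2) 2 u.
  apply: (@dist2I _ (torus_adj p.+2 r.+3.+2) u (o1n, ord0)); tsolve.
have h2 : (ord0, o2m) \in dist_set (torus_adj p.+2 r.+3.+2) 2 u.
  apply: (@dist2I _ (torus_adj p.+2 r.+3.+2) u (ord0, o1m)); tsolve.
have [_ c1] := H u (o1n, o1m); have [_ c2] := H u (ord0, o2m).
move: (c1 h1) (c2 h2) => {c1 c2}.
set S1 := [set x | _ ]; set S2 := [set x | _ ] => E1 E2.
have L1 : 2 <= #|S1|.
  have -> : 2 = #|[set (o1n, ord0 : 'I_r.+3.+2); (ord0 : 'I_p.+2, o1m)]|.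
    by rewrite cards2.
  apply: subset_leq_card; apply/subsetP => x; rewrite !inE => /orP [] /eqP ->; tsolve.
have L2 : #|S2| <= 1.
  rewrite -(cards1 (ord0 : 'I_p.+2, o1m)); apply: subset_leq_card; apply/subsetP.
  move=> [x1 x2]; rewrite !inE xpair_eqE !ord_eqE => hx.
  have := ltn_ord x1; have := ltn_ord x2; move: hx; tsolve.
lia.
Qed.

Lemma not_dr_gen k l (v1 w v2 : 'I_k.+2 * 'I_l.+2) :
  torus_adj k.+2 l.+2 (ord0, ord0) v1 ->
  torus_adj k.+2 l.+2 (ord0, ord0) v2 ->
  torus_adj k.+2 l.+2 v1 w -> torus_adj k.+2 l.+2 (ord0, ord0) w ->
  (forall x, torus_adj k.+2 l.+2 v2 x -> torus_adj k.+2 l.+2 (ord0, ord0) x -> False) ->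
  ~ distance_regular (torus_adj k.+2 l.+2).
Proof.
move=> h1 h2 h3 h4 h5 /(@dr_common _ _ (@eirrG k l)) [a [c H]].
have [E1 _] := H (ord0, ord0) v1; have [E2 _] := H (ord0, ord0) v2.
move: (E1 h1) (E2 h2) => {E1 E2}.
set S1 := [set x | _ ]; set S2 := [set x | _ ] => E1 E2.
have L1 : 0 < #|S1| by apply/card_gt0P; exists w; rewrite inE h3 h4.
have L2 : #|S2| <= 0.
  rewrite -(cards0 ('I_k.+2 * 'I_l.+2)%type).
  apply: subset_leq_card; apply/subsetP => x; rewrite !inE => /andP [] /h5 hh /hh [].
lia.
Qed.

Lemma not_dr_23 : ~ distance_regular (torus_adj 2 3).
Proof.
apply: (@not_dr_gen 0 1 (ord0, @Ordinal 3 1 isT) (ord0, @Ordinal 3 2 isT) (@Ordinal 2 1 isT, ord0)) => //.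
by move=> [[[|[|//]] ?] [[|[|[|//]]] ?]].
Qed.

Lemma not_dr_34 : ~ distance_regular (torus_adj 3 4).
Proof.
apply: (@not_dr_gen 1 2 (@Ordinal 3 1 isT, ord0) (@Ordinal 3 2 isT, ord0) (ord0, @Ordinal 4 1 isT)) => //.
by move=> [[[|[|[|//]]] ?] [[|[|[|[|//]]]] ?]].
Qed.

Theorem propositionA1 (n m : nat) (h2n : 2 <= n) (hnm : n <= m) :
  connected_graph (torus_adj n m) /\
  highly_regular (torus_adj n m) /\
  (distance_regular (torus_adj n m) ->
     (n, m) \in [:: (2, 2); (2, 4); (3, 3); (4, 4)]).
Proof.
case: n h2n hnm => [|[|p]] // _; case: m => [|[|q]] // hpq.
have hpq' : p <= q by [].
split; first exact: conn.
split.
  case: q hpq hpq' => [|q] hpq hpq'.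
    by case: p hpq hpq' => [|//] _ _; exact: hr_small.
  exact: hr_big.
case: q hpq hpq' => [|[|[|r]]] hpq hpq'.
- by case: p hpq hpq' => [|//].
- case: p hpq hpq' => [|[|//]] _ _ //.
  by move/not_dr_23.
- case: p hpq hpq' => [|[|[|//]]] _ _ //.
  by move/not_dr_34.
- by move/not_dr_big.
Qed.
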